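(* Let $N\in\mathbb N$, $p>1$, and $\mathfrak h_{p,N}(x)=\sum_{n\in\mathbb Z,\ |x-n|>N}|\mathrm{sinc}(x-n)|^p$ for $x\in\mathbb R$. (a) If $N\ge \frac1\pi\sqrt{(p+2)(1+p^{-1})}-\frac12$, then $x=1/2$ is a local maximum point of $\mathfrak h_{p,N}$. (b) If $p\le \frac18\big(9\pi^2+\sqrt{16-216\pi^2+81\pi^4}-12\big)\ (\approx 19.1019)$, then $x=1/2$ is a local maximum point of $\mathfrak h_{p,N}$ for every $N\in\mathbb N$.
   Context: $\mathrm{sinc}(x)=\frac{\sin(\pi x)}{\pi x}$ for $x\neq0$ and $\mathrm{sinc}(0)=1$. *)

(* Defs.v *)
From Stdlib Require Import Reals ZArith.
From Coquelicot Require Import Coquelicot.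
Open Scope R_scope.

Definition sinc (x : R) : R :=
  if Req_EM_T x 0 then 1 else sin (PI * x) / (PI * x).

(* |y|^p for real p > 0, with the convention 0^p = 0
   (Stdlib's Rpower 0 p = exp (p * ln 0) = 1 would be wrong). *)
Definition abs_pow (y p : R) : R :=
  if Req_EM_T y 0 then 0 else Rpower (Rabs y) p.

Definition h_term (p : R) (N : nat) (x : R) (n : Z) : R :=
  if Rlt_dec (INR N) (Rabs (x - IZR n)) then abs_pow (sinc (x - IZR n)) p else 0.

Definition h (p : R) (N : nat) (x : R) : R :=
  Series (fun k : nat => h_term p N x (Z.of_nat k))
  + Series (fun k : nat => h_term p N x (- Z.of_nat k - 1)%Z).

Definition local_max_point (f : R -> R) (x0 : R) : Prop :=
  exists eps : R, 0 < eps /\ forall x : R, Rabs (x - x0) < eps -> f x <= f x0.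

(* Main.v *)
Require Import Defs.
From Stdlib Require Import Reals ZArith Lra Lia.
From Coquelicot Require Import Coquelicot.
Open Scope R_scope.


Lemma mono0 (f df : R -> R) (b : R) :
  (forall x, 0 <= x <= b -> is_derive f x (df x)) ->
  (forall x, 0 <= x <= b -> 0 <= df x) ->
  forall x, 0 <= x <= b -> f 0 <= f x.
Proof.
  intros Hd Hp x Hx.
  destruct (Req_dec x 0) as [->|Hx0]; [lra|].
  destruct (MVT_gen f 0 x df) as [c [Hc Hm]].
  - intros y Hy. apply Hd. rewrite Rmin_left in Hy by lra. rewrite Rmax_right in Hy by lra. lra.
  - intros y Hy. rewrite Rmin_left in Hy by lra. rewrite Rmax_right in Hy by lra.
    apply continuity_pt_filterlim. apply (ex_derive_continuous (K:=R_AbsRing) (V:=R_NormedModule)). exists (df y). apply Hd. lra.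
  - rewrite Rmin_left in Hc by lra. rewrite Rmax_right in Hc by lra.
    assert (0 <= df c * (x - 0)) by (apply Rmult_le_pos; [apply Hp; lra| lra]). lra.
Qed.

Lemma ex_series_of_bounded (a : nat -> R) (M : R) :
  (forall n, 0 <= a n) -> (forall n, sum_n a n <= M) -> ex_series a.
Proof.
  intros H0 HM. destruct (ex_finite_lim_seq_incr (sum_n a) M) as [l Hl].
  - intros n. rewrite sum_Sn. specialize (H0 (S n)). unfold plus; simpl. lra.
  - exact HM.
  - exists l. exact Hl.
Qed.

Lemma test_deriv x : is_derive (fun y => sin y - y * cos y) x (x * sin x).
Proof. auto_derive. auto. ring. Qed.


Lemma exp_le' a b : a <= b -> exp a <= exp b.
Proof. intros H; destruct H as [H|H]; [left; apply exp_increasing; auto| subst; lra]. Qed.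

Lemma L1a x : 0 <= x <= PI -> x * cos x <= sin x.
Proof.
  intros Hx.
  pose proof (mono0 (fun y => sin y - y * cos y) (fun y => y * sin y) PI) as H.
  assert (0 <= sin x - x * cos x).
  { replace 0 with (sin 0 - 0 * cos 0) by (rewrite sin_0; ring).
    apply H; [intros; auto_derive; auto; ring| |lra].
    intros y Hy. apply Rmult_le_pos; [lra| apply sin_ge_0; lra]. }
  lra.
Qed.

Lemma L1 x : 0 <= x <= PI -> cos x <= exp (- (x^2/2)).
Proof.
  intros Hx.
  pose proof (mono0 (fun y => - (cos y * exp (y^2/2))) (fun y => (sin y - y * cos y) * exp (y^2/2)) PI) as H.
  assert (- (cos 0 * exp (0^2/2)) <= - (cos x * exp (x^2/2))).
  { apply H; [intros y _; auto_derive; auto; change R in y;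
       replace (y * (y*1) * /2) with (y^2/2) by field; field| |lra].
    intros y Hy. apply Rmult_le_pos; [|left; apply exp_pos]. pose proof (L1a y Hy). lra. }
  rewrite cos_0 in H0. replace (0^2/2) with 0 in H0 by field. rewrite exp_0 in H0.
  rewrite exp_Ropp. pose proof (exp_pos (x^2/2)).
  apply (Rmult_le_reg_r (exp (x^2/2))); auto. rewrite Rinv_l by lra. lra.
Qed.

Lemma L2a u : 0 <= u <= 1/2 -> 1 <= (1+u) * exp (-u + u^2).
Proof.
  intros Hu.
  pose proof (mono0 (fun y => (1+y) * exp (-y + y^2)) (fun y => (y + 2*y^2) * exp (-y+y^2)) (1/2)) as H.
  replace 1 with ((1+0) * exp (-0 + 0^2)) at 1 by (replace (-0+0^2) with 0 by ring; rewrite exp_0; ring).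
  apply H; [intros y _; auto_derive; auto; change R in y;
       replace (- y + y * (y*1)) with (-y + y^2) by field; field| |lra].
  intros y Hy. apply Rmult_le_pos; [nra|left; apply exp_pos].
Qed.

Lemma L2b u : 0 <= u <= 1/2 -> 1 <= (1-u) * exp (u + u^2).
Proof.
  intros Hu.
  pose proof (mono0 (fun y => (1-y) * exp (y + y^2)) (fun y => (y - 2*y^2) * exp (y+y^2)) (1/2)) as H.
  replace 1 with ((1-0) * exp (0 + 0^2)) at 1 by (replace (0+0^2) with 0 by ring; rewrite exp_0; ring).
  apply H; [intros y _; auto_derive; auto; change R in y;
       replace (y + y * (y*1)) with (y + y^2) by field; field| |lra].
  intros y Hy. apply Rmult_le_pos; [nra|left; apply exp_pos].
Qed.

Lemma L3a y : 0 <= y -> exp y - exp (-y) <= y * (exp y + exp (-y)).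
Proof.
  intros Hy.
  pose proof (mono0 (fun z => z * (exp z + exp (-z)) - (exp z - exp (-z))) (fun z => z * (exp z - exp (-z))) y) as H.
  assert (0 * (exp 0 + exp (-0)) - (exp 0 - exp (-0)) <= y * (exp y + exp (-y)) - (exp y - exp (-y))).
  { apply H; [intros z _; auto_derive; auto; change R in z; field| |lra].
    intros z Hz. apply Rmult_le_pos; [lra|]. assert (exp (-z) <= exp z) by (apply exp_le'; lra). lra. }
  rewrite Ropp_0 in H0. lra.
Qed.

Lemma L3 y : 0 <= y -> (exp y + exp (-y)) * exp (- (y^2/2)) <= 2.
Proof.
  intros Hy.
  pose proof (mono0 (fun z => - ((exp z + exp (-z)) * exp (- (z^2/2))))
     (fun z => (z * (exp z + exp (-z)) - (exp z - exp (-z))) * exp (- (z^2/2))) y) as H.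
  assert (- ((exp 0 + exp (-0)) * exp (- (0^2/2))) <= - ((exp y + exp (-y)) * exp (- (y^2/2)))).
  { apply H; [intros z _; auto_derive; auto; change R in z;
       replace (- (z * (z*1) * /2)) with (- (z^2/2)) by field; field| |lra].
    intros z Hz. apply Rmult_le_pos; [|left; apply exp_pos]. pose proof (L3a z ltac:(lra)). lra. }
  rewrite Ropp_0 in H0. replace (- (0^2/2)) with 0 in H0 by field. rewrite exp_0 in H0. lra.
Qed.


Lemma Rpower_exp a p : Rpower (exp a) p = exp (p * a).
Proof. unfold Rpower. rewrite ln_exp. reflexivity. Qed.

Lemma core p b v : 1 < p -> 0 < b -> 0 <= v <= 1/2 -> p*PI^2*b^2 >= p^2 + 2*p ->
  exp (- (p * ((PI*b*v)^2/2))) * (Rpower (/(1-v)) p + Rpower (/(1+v)) p) <= 2.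
Proof.
  intros Hp Hb Hv Hc.
  assert (H1 : Rpower (/(1-v)) p <= exp (p*(v+v^2))).
  { rewrite <- Rpower_exp. apply Rle_Rpower_l; [lra|]. split; [apply Rinv_0_lt_compat; lra|].
    pose proof (L2b v Hv). pose proof (exp_pos (v+v^2)).
    apply (Rmult_le_reg_l (1-v)); [lra|]. rewrite Rinv_r by lra. lra. }
  assert (H2 : Rpower (/(1+v)) p <= exp (p*(-v+v^2))).
  { rewrite <- Rpower_exp. apply Rle_Rpower_l; [lra|]. split; [apply Rinv_0_lt_compat; lra|].
    pose proof (L2a v Hv). pose proof (exp_pos (-v+v^2)).
    apply (Rmult_le_reg_l (1+v)); [lra|]. rewrite Rinv_r by lra. lra. }
  assert (H3 : exp (p*v) + exp (-(p*v)) <= 2 * exp ((p*v)^2/2)).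
  { pose proof (L3 (p*v) ltac:(nra)). pose proof (exp_pos ((p*v)^2/2)).
    assert (E : exp (-((p*v)^2/2)) * exp ((p*v)^2/2) = 1) by (rewrite <- exp_plus; replace (-((p*v)^2/2) + (p*v)^2/2) with 0 by ring; apply exp_0).
    pose proof (exp_pos (p*v)); pose proof (exp_pos (-(p*v))). nra. }
  set (X := p * ((PI*b*v)^2/2)).
  pose proof (exp_pos (-X)).
  apply Rle_trans with (exp (-X) * (exp (p*(v+v^2)) + exp (p*(-v+v^2)))).
  { apply Rmult_le_compat_l; lra. }
  replace (exp (-X) * (exp (p*(v+v^2)) + exp (p*(-v+v^2)))) with
     (exp (-X + p*v^2) * (exp (p*v) + exp (-(p*v)))).
  2:{ rewrite !Rmult_plus_distr_l, <- !exp_plus. f_equal; f_equal; ring. }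
  apply Rle_trans with (exp (-X + p*v^2) * (2 * exp ((p*v)^2/2))).
  { apply Rmult_le_compat_l; [left; apply exp_pos| lra]. }
  replace (exp (-X + p*v^2) * (2 * exp ((p*v)^2/2))) with (2 * exp (-X + p*v^2 + (p*v)^2/2))
    by (rewrite (exp_plus (-X + p*v^2)); idtac; ring).
  assert (exp (-X + p*v^2 + (p*v)^2/2) <= exp 0).
  { apply exp_le'. unfold X.
    assert (0 <= v^2) by nra.
    assert (p*v^2 + (p*v)^2/2 - p * ((PI*b*v)^2/2) = v^2 * (p^2 + 2*p - p*PI^2*b^2)/2) by field.
    nra. }
  rewrite exp_0 in *. lra.
Qed.

Lemma Rpower_pos x p : 0 < Rpower x p.
Proof. unfold Rpower. apply exp_pos. Qed.

Lemma pair_ineq p b t : 1 < p -> 0 < b -> Rabs t <= b/2 -> Rabs t < 1/2 -> p*PI^2*b^2 >= p^2+2*p ->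
  Rpower (cos (PI*t) / (PI*(b-t))) p + Rpower (cos (PI*t) / (PI*(b+t))) p <= 2 * Rpower (/(PI*b)) p.
Proof.
  intros Hp Hb Ht1 Ht2 Hc.
  pose proof PI_RGT_0 as HPI.
  set (v := Rabs t / b).
  assert (Hv : 0 <= v <= 1/2).
  { unfold v. pose proof (Rabs_pos t). split. apply Rmult_le_pos; [lra| left; apply Rinv_0_lt_compat; lra].
    apply (Rmult_le_reg_r b); [lra|]. unfold Rdiv. rewrite Rmult_assoc, Rinv_l by lra. lra. }
  assert (Htv : Rabs t = b * v) by (unfold v; field; lra).
  assert (Hct : cos (PI*t) = cos (PI * Rabs t)).
  { destruct (Rle_or_lt 0 t). rewrite Rabs_right by lra. auto.
    rewrite Rabs_left by lra. rewrite <- cos_neg. f_equal. ring. }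
  assert (Hcpos : 0 < cos (PI*t)).
  { rewrite Hct. pose proof (Rabs_pos t). assert (PI * Rabs t < PI * (1/2)) by (apply Rmult_lt_compat_l; lra). assert (0 <= PI * Rabs t) by nra. apply cos_gt_0; lra. }
  assert (HRc : Rpower (cos (PI*t)) p <= exp (- (p * ((PI*b*v)^2/2)))).
  { replace (- (p * ((PI*b*v)^2/2))) with (p * (- ((PI * Rabs t)^2/2))) by (rewrite Htv; field).
    rewrite <- Rpower_exp. apply Rle_Rpower_l; [lra|]. split; auto.
    rewrite Hct. apply L1. pose proof (Rabs_pos t). split; nra. }
  assert (Hdec : forall s, 0 < 1 + s -> cos (PI*t) / (PI*(b + b*s)) = cos (PI*t) * (/(PI*b) * /(1+s))).
  { intros s Hs. field. repeat split; try lra. nra. }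
  assert (HR : forall s, 0 < 1 + s -> Rpower (cos (PI*t) / (PI*(b + b*s))) p =
      Rpower (cos (PI*t)) p * (Rpower (/(PI*b)) p * Rpower (/(1+s)) p)).
  { intros s Hs. rewrite Hdec by auto.
    assert (0 < / (PI*b)) by (apply Rinv_0_lt_compat; nra).
    assert (0 < / (1+s)) by (apply Rinv_0_lt_compat; lra).
    rewrite (Rpower_mult_distr (/(PI*b)) (/(1+s)) p), Rpower_mult_distr; auto.
    apply Rmult_lt_0_compat; auto. }
  assert (Hsum : Rpower (cos (PI*t) / (PI*(b-t))) p + Rpower (cos (PI*t) / (PI*(b+t))) p =
     Rpower (cos (PI*t)) p * Rpower (/(PI*b)) p * (Rpower (/(1-v)) p + Rpower (/(1+v)) p)).
  { destruct (Rle_or_lt 0 t) as [H0|H0].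
    - assert (t = b*v) by (rewrite <- Htv, Rabs_right; lra).
      replace (b - t) with (b + b*(-v)) by lra. replace (b + t) with (b + b*v) by lra.
      rewrite !HR by lra. replace (1 + - v) with (1 - v) by ring. ring.
    - assert (t = - (b*v)) by (rewrite <- Htv, Rabs_left; lra).
      replace (b - t) with (b + b*v) by lra. replace (b + t) with (b + b*(-v)) by lra.
      rewrite !HR by lra. replace (1 + - v) with (1 - v) by ring. ring. }
  rewrite Hsum.
  pose proof (core p b v Hp Hb Hv Hc) as Hcore.
  pose proof (Rpower_pos (/(PI*b)) p). pose proof (Rpower_pos (/(1-v)) p). pose proof (Rpower_pos (/(1+v)) p).
  pose proof (Rpower_pos (cos (PI*t)) p).
  set (K := Rpower (/(1-v)) p + Rpower (/(1+v)) p) in *.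
  set (E := exp (- (p * ((PI*b*v)^2/2)))) in *.
  assert (0 <= K) by (unfold K; lra).
  assert (Rpower (cos (PI*t)) p * K <= E * K) by (apply Rmult_le_compat_r; lra).
  nra.
Qed.


Lemma Rpower_inv d p : 0 < d -> Rpower (/d) p = Rpower d (-p).
Proof. intros H. unfold Rpower. rewrite ln_Rinv by auto. f_equal; ring. Qed.

Lemma pseries_step c p k : 0 < c -> 1 < p ->
  Rpower (INR k + c + 1) (-p) <=
  (Rpower (INR k + c) (1-p) - Rpower (INR k + c + 1) (1-p)) / (p-1).
Proof.
  intros Hc Hp. pose proof (pos_INR k).
  set (a := INR k + c).
  destruct (MVT_gen (fun y => Rpower y (1-p)) a (a+1) (fun y => (1-p) * Rpower y (-p))) as [xi [Hxi Hm]].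
  - intros y Hy. rewrite Rmin_left in Hy by lra. rewrite Rmax_right in Hy by lra.
    apply is_derive_Reals. replace (-p) with ((1-p) - 1) by ring.
    apply (derivable_pt_lim_power y (1-p)). unfold a in *; lra.
  - intros y Hy. rewrite Rmin_left in Hy by lra. rewrite Rmax_right in Hy by lra.
    apply continuity_pt_filterlim. apply (ex_derive_continuous (K:=R_AbsRing) (V:=R_NormedModule) (fun z => Rpower z (1-p))).
    exists ((1-p) * Rpower y (-p)). apply is_derive_Reals. replace (-p) with ((1-p) - 1) by ring.
    apply (derivable_pt_lim_power y (1-p)). unfold a in *; lra.
  - rewrite Rmin_left in Hxi by lra. rewrite Rmax_right in Hxi by lra.
    assert (Rpower (a+1) (-p) <= Rpower xi (-p)).
    { rewrite !Rpower_Ropp. apply Rinv_le_contravar. apply Rpower_pos.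
      apply Rle_Rpower_l; unfold a in *; lra. }
    simpl in Hm. apply (Rmult_le_reg_r (p-1)); [lra|].
    unfold Rdiv. rewrite Rmult_assoc, Rinv_l by lra. nra.
Qed.

Lemma pseries c p : 0 < c -> 1 < p -> ex_series (fun k => Rpower (/ (INR k + c)) p).
Proof.
  intros Hc Hp.
  apply ex_series_ext with (fun k => Rpower (INR k + c) (-p)).
  { intros n. rewrite Rpower_inv; auto. pose proof (pos_INR n); lra. }
  apply ex_series_incr_1.
  apply ex_series_of_bounded with (Rpower c (1-p) / (p-1)).
  - intros n. left. apply Rpower_pos.
  - assert (forall n, sum_n (fun k => Rpower (INR (S k) + c) (-p)) n <=
              (Rpower c (1-p) - Rpower (INR n + c + 1) (1-p)) / (p-1)).
    { induction n.
      + rewrite sum_O. simpl. replace (1 + c) with (INR 0 + c + 1) by (simpl; ring).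
        replace c with (INR 0 + c) at 2 by (simpl; ring). apply pseries_step; auto.
      + rewrite sum_Sn. set (s := sum_n _ n) in *. change (plus s ?x) with (Rplus s x).
        pose proof (pseries_step c p (S n) Hc Hp). rewrite !S_INR in *.
        replace (INR n + 1 + 1 + c) with (INR n + 1 + c + 1) by ring.
        replace (INR n + c + 1) with (INR n + 1 + c) in IHn by ring. unfold Rdiv in *. rewrite !Rmult_minus_distr_r in *. lra. }
    intros n. eapply Rle_trans; [apply H|].
    pose proof (Rpower_pos (INR n + c + 1) (1-p)).
    unfold Rdiv. apply Rmult_le_compat_r; [left; apply Rinv_0_lt_compat; lra| lra].
Qed.


Lemma sin_shift_minus z n : Rabs (sin (z - INR n * PI)) = Rabs (sin z).
Proof.
  induction n.
  - simpl. f_equal. f_equal. ring.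
  - rewrite S_INR. replace (z - (INR n + 1) * PI) with ((z - INR n * PI) - PI) by ring.
    rewrite <- IHn. rewrite <- (Rabs_Ropp (sin (z - INR n * PI - PI))).
    f_equal. rewrite <- neg_sin. f_equal. ring.
Qed.

Lemma sin_shift_plus z n : Rabs (sin (z + INR n * PI)) = Rabs (sin z).
Proof.
  induction n.
  - simpl. f_equal. f_equal. ring.
  - rewrite S_INR. replace (z + (INR n + 1) * PI) with ((z + INR n * PI) + PI) by ring.
    rewrite neg_sin, Rabs_Ropp. auto.
Qed.

Lemma cos_pos_t t : Rabs t < 1/2 -> 0 < cos (PI * t).
Proof.
  intros Ht. pose proof PI_RGT_0.
  assert (cos (PI*t) = cos (PI * Rabs t)).
  { destruct (Rle_or_lt 0 t). rewrite Rabs_right by lra. auto.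
    rewrite Rabs_left by lra. rewrite <- cos_neg. f_equal. ring. }
  rewrite H0. pose proof (Rabs_pos t). assert (PI * Rabs t < PI * (1/2)) by (apply Rmult_lt_compat_l; lra).
  assert (0 <= PI * Rabs t) by nra. apply cos_gt_0; lra.
Qed.

Lemma sin_half t : sin (PI * (1/2 + t)) = cos (PI * t).
Proof. rewrite cos_sin. f_equal. field. Qed.

Lemma abs_pow_sinc p y d c : y <> 0 -> Rabs (sin (PI*y)) = c -> 0 < c -> Rabs y = d ->
  abs_pow (sinc y) p = Rpower (c/(PI*d)) p.
Proof.
  intros Hy Hs Hc Hd. pose proof PI_RGT_0.
  assert (0 < d) by (rewrite <- Hd; apply Rabs_pos_lt; auto).
  assert (E : Rabs (sin (PI*y) / (PI*y)) = c / (PI*d)).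
  { unfold Rdiv. rewrite Rabs_mult, Rabs_inv, Rabs_mult, (Rabs_right PI) by lra. rewrite Hs, Hd. reflexivity. }
  unfold abs_pow, sinc. destruct (Req_EM_T y 0) as [e|_]; [contradiction|].
  destruct (Req_EM_T (sin (PI * y) / (PI * y)) 0) as [e|_].
  - exfalso. rewrite e, Rabs_R0 in E. assert (0 < c/(PI*d)) by (apply Rdiv_lt_0_compat; nra). lra.
  - rewrite E. reflexivity.
Qed.

Lemma pos_term p N t k : (1 <= N)%nat -> Rabs t < 1/2 ->
  h_term p N (1/2+t) (Z.of_nat (N+1+k)) = Rpower (cos (PI*t) / (PI*(INR N + 1/2 + INR k - t))) p.
Proof.
  intros HN Ht. pose proof PI_RGT_0. pose proof (le_INR _ _ HN). pose proof (pos_INR k). simpl in H0.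
  assert (Hn : INR (N+1+k) = INR N + 1 + INR k) by (rewrite !plus_INR; simpl; ring).
  assert (Htt : -1/2 < t < 1/2) by (split; [apply Rabs_def2 in Ht|apply Rabs_def2 in Ht]; lra).
  unfold h_term. rewrite <- INR_IZR_INZ, Hn.
  assert (Ha : Rabs (1/2 + t - (INR N + 1 + INR k)) = INR N + 1/2 + INR k - t).
  { rewrite Rabs_left by lra. field. }
  destruct (Rlt_dec (INR N) (Rabs (1/2 + t - (INR N + 1 + INR k)))) as [_|Hf]; [|exfalso; lra].
  apply abs_pow_sinc; auto.
  - lra.
  - replace (PI * (1/2 + t - (INR N + 1 + INR k))) with (PI*(1/2+t) - INR (N+1+k) * PI) by (rewrite Hn; ring).
    rewrite sin_shift_minus, sin_half. apply Rabs_right. left; apply cos_pos_t; auto.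
  - apply cos_pos_t; auto.
Qed.

Lemma neg_term p M t k : Rabs t < 1/2 ->
  h_term p (S M) (1/2+t) (- Z.of_nat (M+k) - 1) = Rpower (cos (PI*t) / (PI*(INR (S M) + 1/2 + INR k + t))) p.
Proof.
  intros Ht. pose proof PI_RGT_0. pose proof (pos_INR M). pose proof (pos_INR k).
  assert (Hn : INR (S (M+k)) = INR (S M) + INR k) by (rewrite S_INR, S_INR, plus_INR; ring).
  assert (Htt : -1/2 < t < 1/2) by (split; [apply Rabs_def2 in Ht|apply Rabs_def2 in Ht]; lra).
  unfold h_term. rewrite minus_IZR, opp_IZR, <- INR_IZR_INZ.
  assert (Ha : Rabs (1/2 + t - (- INR (M+k) - 1)) = INR (S M) + 1/2 + INR k + t).
  { rewrite Rabs_right. rewrite S_INR, plus_INR; field. rewrite plus_INR; lra. }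
  destruct (Rlt_dec (INR (S M)) (Rabs (1/2 + t - (- INR (M+k) - 1)))) as [_|Hf];
    [|exfalso; rewrite Ha in Hf; lra].
  apply abs_pow_sinc; auto.
  - rewrite plus_INR; lra.
  - replace (PI * (1/2 + t - (- INR (M+k) - 1))) with (PI*(1/2+t) + INR (S (M+k)) * PI)
      by (rewrite S_INR; ring).
    rewrite sin_shift_plus, sin_half. apply Rabs_right. left; apply cos_pos_t; auto.
  - apply cos_pos_t; auto.
Qed.

Lemma pos_zero p N t k : (1 <= N)%nat -> (k <= N)%nat -> Rabs t < 1/2 ->
  h_term p N (1/2+t) (Z.of_nat k) = 0.
Proof.
  intros HN Hk Ht. pose proof (le_INR _ _ HN). pose proof (le_INR _ _ Hk). pose proof (pos_INR k). simpl in H.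
  assert (Htt : -1/2 < t < 1/2) by (split; [apply Rabs_def2 in Ht|apply Rabs_def2 in Ht]; lra).
  unfold h_term. rewrite <- INR_IZR_INZ.
  destruct (Rlt_dec (INR N) (Rabs (1/2 + t - INR k))) as [Hl|_]; [|reflexivity].
  exfalso. assert (Rabs (1/2 + t - INR k) < INR N) by (apply Rabs_def1; lra). lra.
Qed.

Lemma neg_zero p M t k : (k < M)%nat -> Rabs t < 1/2 ->
  h_term p (S M) (1/2+t) (- Z.of_nat k - 1) = 0.
Proof.
  intros Hk Ht. assert (INR (S k) <= INR M) by (apply le_INR; lia). rewrite S_INR in H.
  pose proof (pos_INR k).
  assert (Htt : -1/2 < t < 1/2) by (split; [apply Rabs_def2 in Ht|apply Rabs_def2 in Ht]; lra).
  unfold h_term. rewrite S_INR, minus_IZR, opp_IZR, <- INR_IZR_INZ.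
  destruct (Rlt_dec (INR M + 1) (Rabs (1/2 + t - (- INR k - 1)))) as [Hl|_]; [|reflexivity].
  exfalso. rewrite Rabs_right in Hl by lra. lra.
Qed.

Lemma Series_shift (a : nat -> R) m : (forall k, (k < m)%nat -> a k = 0) ->
  ex_series (fun k => a (m+k)%nat) -> Series a = Series (fun k => a (m+k)%nat).
Proof.
  intros Hz He. destruct m as [|m].
  - apply Series_ext. intros; reflexivity.
  - rewrite (Series_incr_n a (S m)); [| lia | apply (ex_series_incr_n a (S m)); auto].
    rewrite sum_eq_R0; [ring|]. intros n Hn. apply Hz. simpl in Hn. lia.
Qed.

Lemma ex_terms p t c : 1 < p -> Rabs t < 1/2 -> 0 < c ->
  ex_series (fun k => Rpower (cos (PI*t) / (PI*(INR k + c))) p).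
Proof.
  intros Hp Ht Hc.
  apply (ex_series_le (K:=R_AbsRing) (V:=R_CompleteNormedModule)) with (fun k => Rpower (/ (INR k + c)) p).
  2: apply pseries; auto.
  intros n. pose proof (pos_INR n). pose proof PI_RGT_0. pose proof PI2_1.
  pose proof (cos_pos_t t Ht). 
  assert (cos (PI*t) <= 1) by (apply (proj2 (COS_bound (PI*t)))).

  change (norm (Rpower (cos (PI * t) / (PI * (INR n + c))) p)) with (Rabs (Rpower (cos (PI * t) / (PI * (INR n + c))) p)).
  rewrite Rabs_right by (left; apply Rpower_pos).
  apply Rle_Rpower_l; [lra|]. split.
  - apply Rdiv_lt_0_compat; nra.
  - unfold Rdiv. rewrite Rinv_mult. 
    assert (/PI < 1) by (rewrite <- Rinv_1; apply Rinv_lt_contravar; lra).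
    assert (0 < /PI) by (apply Rinv_0_lt_compat; lra).
    assert (0 < / (INR n + c)) by (apply Rinv_0_lt_compat; lra).
    set (a := /PI) in *. set (b := / (INR n + c)) in *. set (co := cos (PI*t)) in *.
    assert (co * a <= 1) by nra.
    nra.
Qed.


Definition Pf p M s k := Rpower (cos (PI*s) / (PI*(INR (S M) + 1/2 + INR k - s))) p.
Definition Qf p M s k := Rpower (cos (PI*s) / (PI*(INR (S M) + 1/2 + INR k + s))) p.

Lemma ex_Pf p M t : 1 < p -> Rabs t < 1/2 -> ex_series (Pf p M t).
Proof.
  intros Hp Ht. assert (Htt : -1/2 < t < 1/2) by (split; [apply Rabs_def2 in Ht|apply Rabs_def2 in Ht]; lra).
  pose proof (pos_INR (S M)).
  apply ex_series_ext with (fun k => Rpower (cos (PI*t) / (PI*(INR k + (INR (S M) + 1/2 - t)))) p).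
  - intros k. unfold Pf. replace (INR (S M) + 1/2 + INR k - t) with (INR k + (INR (S M) + 1/2 - t)) by ring. reflexivity.
  - apply ex_terms; auto. lra.
Qed.

Lemma ex_Qf p M t : 1 < p -> Rabs t < 1/2 -> ex_series (Qf p M t).
Proof.
  intros Hp Ht. assert (Htt : -1/2 < t < 1/2) by (split; [apply Rabs_def2 in Ht|apply Rabs_def2 in Ht]; lra).
  pose proof (pos_INR (S M)).
  apply ex_series_ext with (fun k => Rpower (cos (PI*t) / (PI*(INR k + (INR (S M) + 1/2 + t)))) p).
  - intros k. unfold Qf. replace (INR (S M) + 1/2 + INR k + t) with (INR k + (INR (S M) + 1/2 + t)) by ring. reflexivity.
  - apply ex_terms; auto. lra.
Qed.

Lemma h_eq p M t : 1 < p -> Rabs t < 1/2 ->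
  h p (S M) (1/2+t) = Series (Pf p M t) + Series (Qf p M t).
Proof.
  intros Hp Ht. unfold h. f_equal.
  - rewrite (Series_shift _ (S M + 1)).
    + apply Series_ext. intros k. unfold Pf. apply pos_term; [lia|auto].
    + intros k Hk. apply pos_zero; [lia|lia|auto].
    + apply ex_series_ext with (Pf p M t); [|apply ex_Pf; auto].
      intros k. unfold Pf. symmetry. apply pos_term; [lia|auto].
  - rewrite (Series_shift _ M).
    + apply Series_ext. intros k. unfold Qf. apply neg_term; auto.
    + intros k Hk. apply neg_zero; auto.
    + apply ex_series_ext with (Qf p M t); [|apply ex_Qf; auto].
      intros k. unfold Qf. symmetry. apply neg_term; auto.
Qed.

Lemma partA p N : 1 < p -> (1 <= N)%nat ->
  (forall b, INR N + 1/2 <= b -> p*PI^2*b^2 >= p^2+2*p) -> local_max_point (h p N) (1/2).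
Proof.
  intros Hp HN Hc. destruct N as [|M]; [lia|].
  exists (1/2). split; [lra|]. intros x Hx.
  set (t := x - 1/2) in *.
  replace x with (1/2 + t) by (unfold t; ring).
  replace (h p (S M) (1/2)) with (h p (S M) (1/2 + 0)) by (f_equal; ring).
  assert (H0 : Rabs 0 < 1/2) by (rewrite Rabs_R0; lra).
  rewrite !h_eq by auto.
  rewrite <- !Series_plus by (first [apply ex_Pf | apply ex_Qf]; auto).
  apply Series_le.
  2:{ exact (ex_series_plus (Pf p M 0) (Qf p M 0) (ex_Pf p M 0 Hp H0) (ex_Qf p M 0 Hp H0)). }
  intros k. split.
  - pose proof (Rpower_pos (cos (PI*t) / (PI*(INR (S M) + 1/2 + INR k - t))) p).
    pose proof (Rpower_pos (cos (PI*t) / (PI*(INR (S M) + 1/2 + INR k + t))) p).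
    unfold Pf, Qf. lra.
  - set (b := INR (S M) + 1/2 + INR k).
    pose proof (pos_INR k). pose proof (pos_INR (S M)). pose proof (le_INR 1 (S M) HN). change (INR 1) with 1 in H2.
    assert (Htt : -1/2 < t < 1/2) by (split; [apply Rabs_def2 in Hx|apply Rabs_def2 in Hx]; lra).
    assert (E : Pf p M 0 k + Qf p M 0 k = 2 * Rpower (/(PI*b)) p).
    { unfold Pf, Qf. fold b. rewrite Rmult_0_r, cos_0, Rminus_0_r, Rplus_0_r.
      unfold Rdiv. rewrite Rmult_1_l. ring. }
    rewrite E. unfold Pf, Qf. fold b.
    apply pair_ineq; auto.
    + unfold b; lra.
    + unfold b. apply Rabs_def2 in Hx. apply Rabs_le. lra.
    + apply Hc. unfold b. lra.
Qed.


Lemma cond_from_sqrt p N : 1 < p -> / PI * sqrt ((p + 2) * (1 + / p)) - / 2 <= INR N ->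
  forall b, INR N + 1/2 <= b -> p*PI^2*b^2 >= p^2+2*p.
Proof.
  intros Hp H b Hb. pose proof PI_RGT_0.
  set (S := (p + 2) * (1 + / p)) in *.
  assert (HS : p * S = p^2 + 3*p + 2) by (unfold S; field; lra).
  assert (0 < S) by (unfold S; assert (0 < /p) by (apply Rinv_0_lt_compat; lra); nra).
  pose proof (sqrt_sqrt S ltac:(lra)). pose proof (sqrt_pos S).
  assert (sqrt S <= PI * b).
  { replace (sqrt S) with (PI * (/PI * sqrt S)) by (field; lra).
    apply Rmult_le_compat_l; lra. }
  assert (S <= (PI*b)^2) by nra.
  nra.
Qed.

Lemma cond_b p : 1 < p -> p <= / 8 * (9 * PI ^ 2 + sqrt (16 - 216 * PI ^ 2 + 81 * PI ^ 4) - 12) ->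
  / PI * sqrt ((p + 2) * (1 + / p)) - / 2 <= 1.
Proof.
  intros Hp H. pose proof PI_RGT_0. pose proof PI2_1.
  set (D := 16 - 216 * PI ^ 2 + 81 * PI ^ 4) in *.
  assert (Hpi2 : 4 < PI^2) by nra.
  assert (HD : 0 <= D) by (unfold D; nra).
  set (R := sqrt D) in *.
  pose proof (sqrt_sqrt D HD) as HR. fold R in HR. pose proof (sqrt_pos D). fold R in H2.
  assert (HR2 : 9*PI^2 - 20 <= R).
  { destruct (Rle_or_lt (9*PI^2 - 20) R) as [|Hl]; auto. exfalso.
    assert (R*R < (9*PI^2-20)*(9*PI^2-20)) by (apply Rmult_le_0_lt_compat; lra).
    unfold D in HR. nra. }
  set (A := 9*PI^2 - 12).
  assert (H8 : (8*p - A)^2 <= R*R).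
  { assert (8*p - A <= R) by (unfold A; lra). assert (-R <= 8*p - A) by (unfold A; lra). nra. }
  rewrite HR in H8. unfold D, A in H8.
  assert (Hq : 4*p^2 - (9*PI^2 - 12)*p + 8 <= 0) by nra.
  set (S := (p + 2) * (1 + / p)).
  assert (HS : p * S = p^2 + 3*p + 2) by (unfold S; field; lra).
  assert (0 < S) by (unfold S; assert (0 < /p) by (apply Rinv_0_lt_compat; lra); nra).
  assert (HS2 : S <= 9*PI^2/4) by nra.
  pose proof (sqrt_sqrt S ltac:(lra)). pose proof (sqrt_pos S).
  assert (sqrt S <= 3*PI/2) by nra.
  assert (/PI * sqrt S <= /PI * (3*PI/2)) by (apply Rmult_le_compat_l; [left; apply Rinv_0_lt_compat|]; lra).
  replace (/PI * (3*PI/2)) with (3/2) in H7 by (field; lra).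
  lra.
Qed.

Theorem corollary1 (p : R) (hp : 1 < p) :
  (forall N : nat, (1 <= N)%nat ->
     / PI * sqrt ((p + 2) * (1 + / p)) - / 2 <= INR N ->
     local_max_point (h p N) (1 / 2))
  /\
  (p <= / 8 * (9 * PI ^ 2 + sqrt (16 - 216 * PI ^ 2 + 81 * PI ^ 4) - 12) ->
     forall N : nat, (1 <= N)%nat -> local_max_point (h p N) (1 / 2)).
Proof.
  assert (HA : forall N : nat, (1 <= N)%nat ->
     / PI * sqrt ((p + 2) * (1 + / p)) - / 2 <= INR N ->
     local_max_point (h p N) (1 / 2)).
  { intros N HN H. apply partA; auto. apply (cond_from_sqrt p N hp H). }
  split; auto.
  intros Hb N HN. apply HA; auto.
  pose proof (cond_b p hp Hb). pose proof (le_INR 1 N HN). change (INR 1) with 1 in H0. lra.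
Qed.
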